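(* Let $C_n$ denote the cycle on $n \geq 3$ vertices. Then $\Gamma_b(C_3) = 1$, and for $n > 3$, \[ \Gamma_b(C_n) = \begin{cases} n-2 & \text{if } n \text{ is even},\\ n-3 & \text{if } n \text{ is odd}.\end{cases} \]
   Context: Let $G=(V,E)$ be a finite connected graph with distance $d(u,v)$. The eccentricity of $v$ is $e(v)=\max_{w\in V} d(v,w)$ and $\mathrm{diam}(G)=\max_v e(v)$. A broadcast on $G$ is a function $f: V \to \{0,1,\dots,\mathrm{diam}(G)\}$ with $f(v) \leq e(v)$ for all $v$; its cost is $\sum_{v\in V} f(v)$. The broadcast $f$ is dominating if for every $u \in V$ there is $v$ with $f(v)\geq 1$ and $d(u,v) \leq f(v)$. A dominating broadcast $f$ is minimal if decreasing the value $f(v)$ of any vertex $v$ with $f(v)>0$ yields a broadcast that is not dominating. The upper broadcast domination number $\Gamma_b(G)$ is the maximum cost of a minimal dominating broadcast on $G$. *)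

(* Defs.v *)
From mathcomp Require Import all_boot all_order.
Set Implicit Arguments. Unset Strict Implicit. Unset Printing Implicit Defensive.

Section Graphs.
Variable T : finType.
Variable e : rel T.

Fixpoint ball (u : T) (k : nat) : {set T} :=
  match k with
  | 0 => [set u]
  | k'.+1 => ball u k' :|: [set y | [exists x in ball u k', e x y]]
  end.

(* graph distance: least k with v in ball u k (every distance in a connected
   graph on #|T| vertices is < #|T|) *)
Definition dist (u v : T) : nat := find (fun k => v \in ball u k) (iota 0 #|T|).

Definition connected_graph : Prop := forall u v : T, exists k, v \in ball u k.

Definition ecc (v : T) : nat := \max_(w : T) dist v w.
Definition diam : nat := \max_(v : T) ecc v.

Definition broadcast (f : T -> nat) : Prop := forall v, f v <= ecc v.

Definition cost (f : T -> nat) : nat := \sum_(v : T) f v.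

Definition dominating (f : T -> nat) : Prop :=
  forall u : T, exists v : T, 1 <= f v /\ dist u v <= f v.

Definition decr (f : T -> nat) (v : T) : T -> nat :=
  fun w => if w == v then (f v).-1 else f w.

Definition minimal_dominating_broadcast (f : T -> nat) : Prop :=
  [/\ broadcast f, dominating f &
      forall v, 0 < f v -> ~ dominating (decr f v)].

Definition is_upper_broadcast_number (g : nat) : Prop :=
  (exists f, minimal_dominating_broadcast f /\ cost f = g) /\
  (forall f, minimal_dominating_broadcast f -> cost f <= g).

End Graphs.

Definition cycle_rel (n : nat) : rel 'I_n :=
  fun i j => (nat_of_ord j == (i.+1) %% n) || (nat_of_ord i == (j.+1) %% n).
Arguments cycle_rel n : clear implicits.

(* Main.v *)
Require Import Defs.
From mathcomp Require Import all_boot all_order.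
From mathcomp Require Import zify.
From Stdlib Require Import ZArith Lia.
Set Implicit Arguments. Unset Strict Implicit. Unset Printing Implicit Defensive.

Definition cd (n a b : nat) : nat := minn (a - b + (b - a)) (n - (a - b + (b - a))).

Lemma step_arith n a b p s k: a < n -> b < n -> (p = b.-1 /\ 0 < b \/ p = n.-1 /\ b = 0) ->
  (s = b.+1 /\ b.+1 < n \/ s = 0 /\ b.+1 = n) -> cd n a b = k.+1 -> k < cd n a p -> cd n a s <= k.
Proof.
rewrite /cd => ha hb hp hs.
case: hp => [[-> hb0]|[-> hb0]]; case: hs => [[-> hs]|[-> hs]]; case: (leqP a b) => hab; lia.
Qed.

Lemma modS (n x : nat) : x < n -> (x.+1 %% n = x.+1 /\ x.+1 < n) \/ (x.+1 %% n = 0 /\ x.+1 = n).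
Proof.
move=> hx; case: (ltngtP x.+1 n) => h.
- by left; rewrite modn_small.
- lia.
- by right; rewrite h modnn.
Qed.

Lemma adj_iff (n : nat) (x y : 'I_n) :
  cycle_rel n x y <-> ((y:nat) = x + 1 \/ ((y:nat) = 0 /\ x + 1 = n) \/ (x:nat) = y + 1 \/ ((x:nat) = 0 /\ y + 1 = n)).
Proof.
have hx := ltn_ord x; have hy := ltn_ord y.
rewrite /cycle_rel; split.
- case/orP=> /eqP h.
  + have := modS hx; lia.
  + have := modS hy; lia.
- move=> h.
  have := modS hx; have := modS hy.
  move=> [[h1 h2]|[h1 h2]] [[h3 h4]|[h3 h4]]; rewrite ?h1 ?h3; lia.
Qed.

Lemma ord_pred_val (n : nat) (b : 'I_n) : (nat_of_ord (ord_pred b) = if (nat_of_ord b == 0) then n.-1 else (nat_of_ord b).-1)%N.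
Proof.
have hb := ltn_ord b.
rewrite /ord_pred /=; case: eqP => h.
- rewrite h add0n modn_small //; lia.
- have -> : (b + n).-1 = (b.-1) + n by lia.
  by rewrite modnDr modn_small //; lia.
Qed.

Lemma ball_cd (n : nat) (a b : 'I_n) k :
  (b \in ball (cycle_rel n) a k) = (cd n a b <= k).
Proof.
have ha := ltn_ord a.
elim: k b => [|k IH] b.
  have hb := ltn_ord b.
  rewrite /= in_set1; apply/idP/idP.
  - by move/eqP=> ->; rewrite /cd; lia.
  - rewrite /cd => h; apply/eqP; apply: val_inj => /=; lia.
rewrite /= in_setU in_set IH; apply/idP/idP.
- case/orP; first by move=> h; apply: leq_trans h _.
  case/existsP=> x /andP [hx /adj_iff hxb]; rewrite IH in hx.
  have := ltn_ord x; have := ltn_ord b; rewrite /cd in hx *; lia.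
- move=> h; case: (leqP (cd n a b) k) => hk; first by apply/orP; left; rewrite ?IH.
  apply/orP; right; apply/existsP.
  have hb := ltn_ord b.
  have hp := ord_pred_val b.
  have hs : nat_of_ord (ordS b) = b.+1 %% n by [].
  have hs2 := modS hb.
  have hsb : cycle_rel n (ordS b) b by rewrite /cycle_rel hs eqxx orbT.
  have hpb : cycle_rel n (ord_pred b) b.
    apply/adj_iff; move: hp; case: eqP; lia.
  case: (leqP (cd n a (ord_pred b)) k) => h1.
    by exists (ord_pred b); rewrite IH h1.
  exists (ordS b); rewrite IH hsb andbT.
  rewrite hs; apply: (step_arith ha hb _ _ _ h1).
  - move: hp; case: eqP => ?; lia.
  - case: hs2 => [[-> ?]|[-> ?]]; lia.
  - lia.
Qed.


Lemma find_iota_leq (c n : nat) : c < n -> find (fun k => c <= k) (iota 0 n) = c.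
Proof.
move=> h; have -> : n = c + (n - c) by lia.
rewrite iotaD find_cat size_iota add0n.
have -> : has (fun k => c <= k) (iota 0 c) = false.
  apply/hasPn => x; rewrite mem_iota; lia.
have -> : n - c = (n - c).-1.+1 by lia.
by rewrite /= leqnn addn0.
Qed.

Lemma cd_lt (n a b : nat) : a < n -> b < n -> cd n a b < n.
Proof. rewrite /cd; lia. Qed.

Lemma dist_cd (n : nat) (a b : 'I_n) : dist (cycle_rel n) a b = cd n a b.
Proof.
rewrite /dist card_ord.
rewrite (eq_find (a2 := fun k => cd n a b <= k)); last by move=> k; rewrite ball_cd.
by apply: find_iota_leq; apply: cd_lt.
Qed.

Lemma ecc_le (n : nat) (v : 'I_n) : ecc (cycle_rel n) v <= n./2.
Proof.
apply/bigmax_leqP => w _; rewrite dist_cd.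
have := ltn_ord v; have := ltn_ord w; have := odd_double_half n.
rewrite /cd; case: (odd n) => /=; lia.
Qed.

Lemma ecc_ge (n : nat) (v w : 'I_n) : cd n v w <= ecc (cycle_rel n) v.
Proof. rewrite -dist_cd; exact: (leq_bigmax (F := fun w => dist (cycle_rel n) v w) w). Qed.

Lemma cd_near (n a b k : nat) : a < n -> b < n -> cd n a b <= k ->
  exists z q : Z, (- Z.of_nat k <= z <= Z.of_nat k)%Z /\ Z.of_nat b = (Z.of_nat a + z + q * Z.of_nat n)%Z.
Proof.
rewrite /cd => ha hb h.
case: (leqP (a - b + (b - a)) k) => h1.
  exists (Z.of_nat b - Z.of_nat a)%Z, 0%Z; lia.
case: (leqP a b) => hab.
  exists (Z.of_nat b - Z.of_nat a - Z.of_nat n)%Z, 1%Z; lia.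
exists (Z.of_nat b - Z.of_nat a + Z.of_nat n)%Z, (-1)%Z; lia.
Qed.

Lemma near_cd (n a b k : nat) (z q : Z) : a < n -> b < n ->
  (- Z.of_nat k <= z <= Z.of_nat k)%Z -> Z.of_nat b = (Z.of_nat a + z + q * Z.of_nat n)%Z ->
  cd n a b <= k.
Proof.
rewrite /cd => ha hb hz he.
case: (Z.lt_trichotomy q 0) => [hq|[hq|hq]].
- have : (q * Z.of_nat n <= - Z.of_nat n)%Z by nia.
  lia.
- subst q; lia.
- have : (q * Z.of_nat n >= Z.of_nat n)%Z by nia.
  lia.
Qed.

Lemma cd_half (n : nat) (a b : 'I_n) : cd n a b <= n./2.
Proof. by rewrite -dist_cd; apply: leq_trans (ecc_le a); apply: (leq_bigmax (F := fun w => dist (cycle_rel n) a w) b). Qed.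


Lemma three_arcs_Z (s1 s2 s3 t1 t2 t3 f1 f2 f3 : Z) :
  (- f1 <= s1 <= f1)%Z -> (- f2 <= s2 <= f2)%Z -> (- f3 <= s3 <= f3)%Z ->
  (- f1 <= t1 <= f1)%Z -> (- f2 <= t2 <= f2)%Z -> (- f3 <= t3 <= f3)%Z ->
  (s1 - t1 < s2 - f2 \/ s1 - t1 > s2 + f2)%Z ->
  (s1 - t1 < s3 - f3 \/ s1 - t1 > s3 + f3)%Z ->
  (s2 - t2 < s1 - f1 \/ s2 - t2 > s1 + f1)%Z ->
  (s2 - t2 < s3 - f3 \/ s2 - t2 > s3 + f3)%Z ->
  (s3 - t3 < s1 - f1 \/ s3 - t3 > s1 + f1)%Z ->
  (s3 - t3 < s2 - f2 \/ s3 - t3 > s2 + f2)%Z -> False.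
Proof. lia. Qed.

Lemma sep (n u p wi wj fj : nat) (si ai ti bi sj aj : Z) :
  p < n -> wj < n ->
  Z.of_nat wi = (Z.of_nat u + si + ai * Z.of_nat n)%Z ->
  Z.of_nat wi = (Z.of_nat p + ti + bi * Z.of_nat n)%Z ->
  Z.of_nat wj = (Z.of_nat u + sj + aj * Z.of_nat n)%Z ->
  ~ (cd n p wj <= fj) ->
  (si - ti < sj - Z.of_nat fj \/ si - ti > sj + Z.of_nat fj)%Z.
Proof.
move=> hp hw e1 e2 e3 hn.
case: (Z.lt_ge_cases (si - ti) (sj - Z.of_nat fj)) => h1; first by left.
case: (Z.lt_ge_cases (sj + Z.of_nat fj) (si - ti)) => h2; first by right; lia.
exfalso; apply: hn.
apply: (near_cd (z := (sj - (si - ti))%Z) (q := (aj - ai + bi)%Z) hp hw); lia.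
Qed.

Lemma no_triple (n : nat) (f : 'I_n -> nat) (u w1 w2 w3 p1 p2 p3 : 'I_n) :
  cd n u w1 <= f w1 -> cd n u w2 <= f w2 -> cd n u w3 <= f w3 ->
  cd n p1 w1 <= f w1 -> cd n p2 w2 <= f w2 -> cd n p3 w3 <= f w3 ->
  ~ (cd n p1 w2 <= f w2) -> ~ (cd n p1 w3 <= f w3) ->
  ~ (cd n p2 w1 <= f w1) -> ~ (cd n p2 w3 <= f w3) ->
  ~ (cd n p3 w1 <= f w1) -> ~ (cd n p3 w2 <= f w2) -> False.
Proof.
have hu := ltn_ord u; have h1 := ltn_ord w1; have h2 := ltn_ord w2; have h3 := ltn_ord w3.
have g1 := ltn_ord p1; have g2 := ltn_ord p2; have g3 := ltn_ord p3.
move=> /(cd_near hu h1) [s1 [a1 [hs1 e1]]] /(cd_near hu h2) [s2 [a2 [hs2 e2]]] /(cd_near hu h3) [s3 [a3 [hs3 e3]]].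
move=> /(cd_near g1 h1) [t1 [b1 [ht1 d1]]] /(cd_near g2 h2) [t2 [b2 [ht2 d2]]] /(cd_near g3 h3) [t3 [b3 [ht3 d3]]].
move=> n12 n13 n21 n23 n31 n32.
apply: (three_arcs_Z hs1 hs2 hs3 ht1 ht2 ht3).
- exact: (sep g1 h2 e1 d1 e2 n12).
- exact: (sep g1 h3 e1 d1 e3 n13).
- exact: (sep g2 h1 e2 d2 e1 n21).
- exact: (sep g2 h3 e2 d2 e3 n23).
- exact: (sep g3 h1 e3 d3 e1 n31).
- exact: (sep g3 h2 e3 d3 e2 n32).
Qed.


Lemma modn_cases (c n : nat) : c < n + n -> (c < n /\ c %% n = c) \/ (n <= c /\ c %% n = c - n).
Proof.
move=> h; case: (ltnP c n) => h1; first by left; rewrite modn_small.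
right; split => //.
have {1}-> : c = (c - n) + n by lia.
rewrite modnDr modn_small //; lia.
Qed.

Lemma ball_card (n : nat) (v : 'I_n) k : k + k < n ->
  k + k + 1 <= #|[set u : 'I_n | cd n u v <= k]|.
Proof.
move=> hk.
have hv := ltn_ord v.
have n0 : 0 < n by lia.
pose a := (v + (n - k)) %% n.
have ha : (v + (n - k) < n /\ a = v + (n - k)) \/ (n <= v + (n - k) /\ a = v + (n - k) - n).
  by apply: modn_cases; lia.
clearbody a.
pose g (t : 'I_(k + k + 1)) : 'I_n := Ordinal (ltn_pmod (a + t) n0).
have ginj : injective g.
  move=> t1 t2 /(congr1 val) /= /eqP; rewrite eqn_modDl => /eqP.
  have := ltn_ord t1; have := ltn_ord t2 => h1 h2.
  rewrite !modn_small; try lia.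
  by move=> e; apply: val_inj.
have -> : k + k + 1 = #|[set g t | t : 'I_(k + k + 1)]| by rewrite card_imset // card_ord.
apply: subset_leq_card; apply/subsetP => x /imsetP [t _ ->].
rewrite in_set /=.
have ht := ltn_ord t.
have := @modn_cases (a + t) n.
rewrite /cd; move: ((a + t) %% n) => y; lia.
Qed.


Definition privb (n : nat) (f : 'I_n -> nat) (u v : 'I_n) : bool :=
  (cd n u v <= f v) && [forall w, (w != v) && (0 < f w) ==> (f w < cd n u w)].

Lemma pick_in (n : nat) (A : {set 'I_n}) : 0 < #|A| -> exists x, x \in A.
Proof. by rewrite card_gt0 => /set0Pn. Qed.

Lemma upper (n : nat) (f : 'I_n -> nat) : 3 <= n ->
  minimal_dominating_broadcast (cycle_rel n) f ->
  cost f <= (if n == 3 then 1 else n./2 + n./2 - 2).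
Proof.
move=> n3 [hb hd hmin].
set m := n./2.
have hnm : n = m + m \/ n = m + m + 1.
  have := odd_double_half n; rewrite -/m; case: (odd n) => /=; lia.
have fle : forall v, f v <= m := fun v => leq_trans (hb v) (ecc_le v).
have hd' : forall u : 'I_n, exists v : 'I_n, 1 <= f v /\ cd n u v <= f v.
  by move=> u; have [v [h1 h2]] := hd u; exists v; rewrite -dist_cd.
have hpriv : forall v : 'I_n, 0 < f v -> exists u : 'I_n, privb f u v.
  move=> v hv; case: (boolP [exists u, privb f u v]) => [/existsP //|hno].
  exfalso; apply: (hmin v hv) => u.
  move: hno; rewrite negb_exists => /forallP /(_ u).
  rewrite /privb negb_and -ltnNge negb_forall => /orP [h|/existsP [w]].
    have [w [h1 h2]] := hd' u.
    exists w; rewrite /decr; case: eqP => [e|_]; last by rewrite dist_cd.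
    by subst w; lia.
  rewrite negb_imply -leqNgt => /andP [/andP [hwv hw] hcw].
  by exists w; rewrite /decr (negbTE hwv) dist_cd.
pose p (v : 'I_n) := odflt v [pick u | privb f u v].
have pP : forall v : 'I_n, 0 < f v -> privb f (p v) v.
  move=> v hv; rewrite /p; case: pickP => [u //|hn].
  by have [u hu] := hpriv v hv; rewrite hn in hu.
pose S := [set v | 0 < f v].
have hcost : cost f = \sum_(v in S) f v.
  rewrite /cost [RHS]big_mkcond /=; apply: eq_bigr => v _; rewrite in_set.
  by case: posnP => // ->.
have hcd := @cd_half n.
case: (leqP #|S| 1) => hS1.
  rewrite hcost.
  have : \sum_(v in S) f v <= \sum_(v in S) m by apply: leq_sum => v _; apply: fle.
  rewrite sum_nat_const; move: hS1; rewrite -/m; case: eqP; nia.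
have fle2 : forall v : 'I_n, v \in S -> f v < m.
  move=> v; rewrite in_set => hv.
  have hS : 0 < #|S :\ v| by move: hS1; rewrite (cardsD1 v) in_set hv; lia.
  have [w] := pick_in hS; rewrite !(in_setD1, in_set) => /andP [hwv hw].
  have := pP w hw; rewrite /privb => /andP [_ /forallP /(_ v)].
  rewrite eq_sym hwv hv /= => hlt.
  exact: (leq_trans hlt (hcd _ _)).
case: (leqP #|S| 2) => hS2.
  rewrite hcost.
  have : \sum_(v in S) f v <= \sum_(v in S) m.-1.
    by apply: leq_sum => v hv; have := fle2 v hv; lia.
  rewrite sum_nat_const; move: hS2; rewrite -/m; case: eqP; nia.
pose Bv (v : 'I_n) := [set u : 'I_n | cd n u v <= f v].
pose H (u : 'I_n) := [set v in S | u \in Bv v].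
pose P := [set u | [exists v, (0 < f v) && privb f u v]].
have H1 : \sum_(v in S) (f v + f v + 1) <= \sum_(v in S) #|Bv v|.
  apply: leq_sum => v hv; apply: ball_card; have := fle2 v hv; lia.
have H2 : \sum_(v in S) #|Bv v| = \sum_u #|H u|.
  transitivity (\sum_(v in S) \sum_u (if u \in Bv v then 1 else 0)).
    by apply: eq_bigr => v _; rewrite -sum1_card big_mkcond.
  rewrite exchange_big; apply: eq_bigr => u _.
  rewrite -big_mkcondr -sum1_card; apply: eq_bigl => v; by rewrite /H in_set.
have H3 : forall u : 'I_n, #|H u| + (u \in P) <= 2.
  move=> u; case: (boolP (u \in P)) => hu.
    have := hu; rewrite in_set => /existsP [v /andP [hv /andP [_ /forallP hall]]].
    have : H u \subset [set v].
      apply/subsetP => w; rewrite !(in_set1, in_set) => /andP [hw hwu].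
      case: (eqVneq w v) => // hwv; have := hall w; rewrite hwv hw /= => hlt; lia.
    by move/subset_leq_card; rewrite cards1; lia.
  rewrite addn0 leqNgt; apply/negP => h3.
  have [w1 h1] := pick_in (ltn_trans (isT : 0 < 2) h3).
  have h3' : 1 < #|H u :\ w1| by move: h3; rewrite (cardsD1 w1) h1 add1n ltnS.
  have [w2 h2] := pick_in (ltn_trans (isT : 0 < 1) h3').
  have h3'' : 0 < #|H u :\ w1 :\ w2| by move: h3'; rewrite (cardsD1 w2) h2 add1n ltnS.
  have [w3 h3w] := pick_in h3''.
  move: h1 h2 h3w; rewrite !(in_setD1, in_set) => /andP [s1 b1] /andP [n21 /andP [s2 b2]] /andP [n32 /andP [n31 /andP [s3 b3]]].
  have q1 := pP w1 s1; have q2 := pP w2 s2; have q3 := pP w3 s3.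
  move: q1 q2 q3; rewrite /privb => /andP [c1 /forallP a1] /andP [c2 /forallP a2] /andP [c3 /forallP a3].
  have nn : forall (x y : 'I_n) a, y != x -> 0 < f y -> (f y < cd n a y) -> ~ (cd n a y <= f y).
    by move=> x y a _ _ h; lia.
  apply: (no_triple b1 b2 b3 c1 c2 c3).
  - by have := a1 w2; rewrite n21 s2 /=; lia.
  - by have := a1 w3; rewrite n31 s3 /=; lia.
  - by have := a2 w1; rewrite eq_sym n21 s1 /=; lia.
  - by have := a2 w3; rewrite n32 s3 /=; lia.
  - by have := a3 w1; rewrite eq_sym n31 s1 /=; lia.
  - by have := a3 w2; rewrite eq_sym n32 s2 /=; lia.
have H4 : #|S| <= #|P|.
  have -> : #|S| = #|[set p v | v in S]|.
    rewrite card_in_imset // => v w; rewrite !in_set => hv hw e.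
    case: (eqVneq v w) => // hvw; exfalso.
    have := pP v hv; have := pP w hw; rewrite -e /privb => /andP [c _] /andP [_ /forallP /(_ w)].
    rewrite eq_sym hvw hw /=; lia.
  apply: subset_leq_card; apply/subsetP => x /imsetP [v hv ->].
  by rewrite in_set; apply/existsP; exists v; move: hv; rewrite in_set => hv; rewrite hv pP.
have H5 : \sum_u #|H u| + #|P| <= n + n.
  have -> : #|P| = \sum_u (u \in P) by rewrite -sum1_card big_mkcond.
  rewrite -big_split /=.
  apply: (@leq_trans (\sum_(u : 'I_n) 2)); first by apply: leq_sum => u _; apply: H3.
  by rewrite sum_nat_const card_ord muln2 addnn.
have H6 : \sum_(v in S) (f v + f v + 1) = cost f + cost f + #|S|.
  by rewrite !big_split /= sum1_card hcost.
move: H1; rewrite H2 H6 => H1.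
move: hS2; rewrite -/m; case: eqP; lia.
Qed.


Lemma constr_big (n : nat) : 3 < n ->
  exists f, minimal_dominating_broadcast (cycle_rel n) f /\ cost f = n./2 + n./2 - 2.
Proof.
move=> n4.
set m := n./2.
set d := if odd n then 2 else 1.
have hnd : (n = m + m /\ d = 1) \/ (n = m + m + 1 /\ d = 2).
  have := odd_double_half n; rewrite -/m /d; case: (odd n) => /=; lia.
clearbody m d.
pose f (i : 'I_n) := if (nat_of_ord i == 0) || (nat_of_ord i == d) then m.-1 else 0.
have h0 : 0 < n by lia.
have hdn : d < n by lia.
pose o0 : 'I_n := Ordinal h0.
pose od : 'I_n := Ordinal hdn.
exists f; split; first split.
- move=> v; rewrite /f; case: ifP => hv //.
  have hw : v + m < n by lia.
  apply: leq_trans (ecc_ge v (Ordinal hw)); rewrite /cd /=; lia.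
- move=> u; have hu := ltn_ord u.
  case: (leqP (cd n u o0) m.-1) => h.
    exists o0; rewrite dist_cd /f /=; move: h; rewrite /cd /=; lia.
  exists od; rewrite dist_cd /f /=; move: h; rewrite /cd /=.
  have -> : (d == 0) = false by lia.
  rewrite eqxx /=; lia.
- move=> v hv H.
  have e0 : (d == 0) = false by lia.
  have hv' : nat_of_ord v = 0 \/ nat_of_ord v = d by move: hv; rewrite /f; case: ifP; lia.
  have hu : (if nat_of_ord v == 0 then m + d else m + d - 1) < n by case: eqP; lia.
  have [w [h1 h2]] := H (Ordinal hu).
  rewrite dist_cd in h2.
  have hw := ltn_ord w.
  move: h1 h2; rewrite /decr /cd /=.
  case: (eqVneq w v) => [->|hwv].
    case: hv' => e; rewrite /f e ?eqxx ?e0 /=; lia.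
  have hwv' : nat_of_ord w != nat_of_ord v by [].
  rewrite {1 2}/f; case: ifP => hfw; case: hv' => e; move: hwv' hfw; rewrite /f e ?eqxx ?e0 /=; lia.
- rewrite /cost (bigD1 o0) // (bigD1 od) /=; last by rewrite -val_eqE /=; lia.
  rewrite big1 /=.
    rewrite /f /=; have -> : (d == 0) = false by lia.
    rewrite eqxx /=; lia.
  move=> i /andP [h1 h2]; move: h1 h2; rewrite -!val_eqE /= => h1 h2.
  rewrite /f; case: ifP => //; lia.
Qed.

Lemma constr3 : exists f, minimal_dominating_broadcast (cycle_rel 3) f /\ cost f = 1.
Proof.
have h0 : 0 < 3 by [].
have h1 : 1 < 3 by [].
pose o0 : 'I_3 := Ordinal h0.
pose f (i : 'I_3) := if nat_of_ord i == 0 then 1 else 0.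
exists f; split; first split.
- move=> v; rewrite /f; case: ifP => hv //.
  apply: leq_trans (ecc_ge v (Ordinal h1)); move: hv; rewrite /cd /=; lia.
- move=> u; exists o0; rewrite dist_cd /f /=; have := ltn_ord u; rewrite /cd; lia.
- move=> v hv H.
  have [w [h1' h2]] := H o0.
  move: h1'; rewrite /decr /f; case: (eqVneq w v) => [_|hwv]; first by case: ifP.
  case: ifP => hw //.
  move: hv; rewrite /f; case: ifP => // hv _.
  by case/eqP: hwv; apply: ord_inj; lia.
- rewrite /cost (bigD1 o0) // big1 /=; first by rewrite /f.
  move=> i; rewrite -val_eqE /f /= => h; case: ifP => //; lia.
Qed.


Theorem mainTheorem4 :
  is_upper_broadcast_number (cycle_rel 3) 1 /\
  (forall n : nat, 3 < n ->
     is_upper_broadcast_number (cycle_rel n) (if odd n then n - 3 else n - 2)).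
Proof.
split.
  split; first exact: constr3.
  by move=> f hf; have := upper (leqnn 3) hf.
move=> n hn.
have -> : (if odd n then n - 3 else n - 2) = n./2 + n./2 - 2.
  have := odd_double_half n; case: (odd n) => /=; lia.
split; first exact: constr_big.
move=> f hf; have := upper (ltnW hn) hf.
have -> : (n == 3) = false by lia.
done.
Qed.
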